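(* Let $\mathbf{X}$ be $(\epsilon,\delta)$-kernel learnable from $\mathbf{Z}$ using $T(\epsilon,\delta)$ samples, and suppose that $0<d_{TV}(\mathbf{X},\mathbf{X}')=\kappa<1$. If $T_0>\max\{T(\epsilon,\delta),C\cdot\frac{\log(1/\delta)}{\epsilon^2}\}$ (for a suitable absolute constant $C$), then $\mathbf{X}'$ is $(2\epsilon+2\kappa,2\delta)$-kernel learnable from $T_0$ samples using $\mathbf{Z}$.
   Context: Let $\mathbf{Y},\mathbf{Z}$ be distributions supported on $\mathbb{Z}$. $\mathbf{Y}$ is $(\epsilon,\delta)$-kernel learnable from $T$ samples using $\mathbf{Z}$ if the following holds: for every $T_1\ge T$, if $\hat Y=\{y_1,\dots,y_{T_1}\}$ is a multiset of $T_1$ i.i.d. samples from $\mathbf{Y}$ and $\mathbf{U}_{\hat Y}$ is the uniform distribution over $\hat Y$, then with probability $1-\delta$ over $\hat Y$ we have $d_{TV}(\mathbf{U}_{\hat Y}+\mathbf{Z},\mathbf{Y})\le\epsilon$ (here $+$ denotes the sum of independent random variables). $d_{TV}$ is total variation distance. *)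

(* Defs.v *)
From HB Require Import structures.
From mathcomp Require Import all_boot all_order all_algebra.
From mathcomp Require Import all_classical all_reals all_analysis.
From mathcomp Require Import Rstruct.
From Stdlib Require Import Rdefinitions.
Set Implicit Arguments. Unset Strict Implicit. Unset Printing Implicit Defensive.
Import Order.TTheory GRing.Theory Num.Theory.
Local Open Scope classical_set_scope.
Local Open Scope ring_scope.

Record distZ := DistZ {
  dpmf : int -> R;
  dpmf_ge0 : forall z, 0 <= dpmf z;
  dpmf_sum1 : (\esum_(z in [set: int]) (dpmf z)%:E = 1)%E
}.

Definition dTV (p q : int -> R) : \bar R :=
  ((1/2)%:E * \esum_(z in [set: int]) (`|p z - q z|)%:E)%E.

(* dpmf of U_{Yhat} + Z, where Yhat = {y_1,...,y_T1} (a multiset, given as a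
   tuple) and U_{Yhat} is uniform over the multiset:
   P(U + Z = x) = (1/T1) * sum_i P(Z = x - y_i). *)
Definition unif_plus (T1 : nat) (s : T1.-tuple int) (Zd : distZ) (x : int) : R :=
  \sum_(i < T1) (dpmf Zd (x - tnth s i)) / T1%:R.

Definition prob_iid (Y : distZ) (T1 : nat) (E : T1.-tuple int -> Prop) : \bar R :=
  (\esum_(s in [set s : T1.-tuple int | E s]) (\prod_(i < T1) dpmf Y (tnth s i))%:E)%E.

Definition kernel_learnable (Y Zd : distZ) (eps delta : R) (T : nat) : Prop :=
  forall T1 : nat, (T <= T1)%nat ->
    (prob_iid Y (fun s : T1.-tuple int => (dTV (unif_plus s Zd) (dpmf Y) <= eps%:E)%E)
      >= (1 - delta)%:E)%E.

(* Main.v *)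
Require Import Defs.
From HB Require Import structures.
From mathcomp Require Import all_boot all_order all_algebra.
From mathcomp Require Import all_classical all_reals all_analysis.
From mathcomp Require Import Rstruct.
From Stdlib Require Import Rdefinitions.
From mathcomp Require Import ring lra.
Import Order.TTheory GRing.Theory Num.Theory.
Local Open Scope ring_scope.
Local Open Scope classical_set_scope.

Lemma esumZl (T : choiceType) (S : set T) (c : R) (a : T -> \bar R) :
  0 <= c -> (forall x, (0 <= a x)%E) ->
  \esum_(i in S) (c%:E * a i)%E = (c%:E * \esum_(i in S) a i)%E.
Proof.
move=> c0 a0; rewrite /esum -ereal_supZl //; last first.
  by apply/set0P; exists 0%E; exists set0; [exact: fsets_set0| rewrite fsbig_set0].
congr ereal_sup; apply/seteqP; split => x /= [X HX <-].
  by exists (\sum_(i \in X) a i)%E; [exists X|rewrite ge0_mule_fsumr].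
by case: HX => [Y HY <-]; exists Y => //; rewrite ge0_mule_fsumr.
Qed.

Lemma esum_swap (A B : choiceType) (a : A -> B -> \bar R) :
  (forall x y, (0 <= a x y)%E) ->
  \esum_(x in [set: A]) \esum_(y in [set: B]) a x y =
  \esum_(y in [set: B]) \esum_(x in [set: A]) a x y.
Proof.
move=> a0; rewrite (esum_esum (J := fun _ => setT)) //.
rewrite (esum_esum (J := fun _ => setT)) //.
rewrite (reindex_esum ([set: B] `*`` (fun _ => [set: A])) _ (fun x => (x.2, x.1))) //.
split.
- by move=> [x y] _.
- by move=> [x y] [x' y'] _ _ [-> ->].
- by move=> [x y] _; exists (y, x).
Qed.

Lemma esum_pt (A : choiceType) (a0 : A) (v : R) : 0 <= v ->
  \esum_(x in [set: A]) (if x == a0 then v else 0)%:E = v%:E.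
Proof.
move=> v0; rewrite -(esum_set1 (T:=A) (t := a0) (a := fun _ => v%:E)) ?lee_fin //.
rewrite [in RHS]esum_mkcond; apply: eq_esum => x _.
case: (eqVneq x a0) => [->|xa].
  by rewrite mem_set.
by rewrite memNset //=; apply/eqP.
Qed.

Lemma esum_shift (f : int -> \bar R) (c : int) :
  \esum_(x in [set: int]) f (x - c) = \esum_(x in [set: int]) f x.
Proof.
rewrite [RHS](reindex_esum [set: int] [set: int] (fun x => x - c)) //.
split.
- by [].
- by move=> x y _ _ /addIr.
- by move=> y _; exists (y + c) => //; rewrite addrK.
Qed.

Lemma prod_esum (n : nat) (f : nat -> int -> R) (c : nat -> R) :
  (forall i z, 0 <= f i z) ->
  (forall i, \esum_(z in [set: int]) (f i z)%:E = (c i)%:E) ->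
  \esum_(s in [set: n.-tuple int]) (\prod_(i < n) f i (tnth s i))%:E =
  (\prod_(i < n) c i)%:E.
Proof.
elim: n f c => [|n IH] f c f0 fc.
  rewrite big_ord0 (_ : [set: 0.-tuple int] = [set [tuple]]); last first.
    by apply/seteqP; split => // t _; rewrite (tuple0 t).
  by rewrite esum_set1 big_ord0.
have c0 i : 0 <= c i.
  by rewrite -lee_fin -fc; apply: esum_ge0 => z _; rewrite lee_fin.
rewrite (reindex_esum ([set: int] `*`` (fun _ => [set: n.-tuple int])) _
   (fun p : int * n.-tuple int => [tuple of p.1 :: p.2])); last first.
  split.
  - by move=> p _.
  - move=> [x t] [x' t'] _ _ /= /(congr1 val) /= [-> /val_inj ->] //.
  - move=> s _; exists (thead s, behead_tuple s) => //.
    by rewrite /= [RHS]tuple_eta.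
rewrite -(esum_esum (J := fun _ => [set: n.-tuple int])
  (a := fun x t => (\prod_(i0 < n.+1) f i0 (tnth [tuple of x :: t] i0))%:E)) //; last first.
  by move=> i j _ _; rewrite lee_fin; apply: prodr_ge0 => k _.
transitivity (\esum_(x in [set: int]) ((f 0%N x)%:E * (\prod_(i < n) c i.+1)%:E))%E.
  apply: eq_esum => x _.
  rewrite -(IH (fun i => f i.+1) (fun i => c i.+1)) // -esumZl //; last first.
    by move=> t; rewrite lee_fin; apply: prodr_ge0 => k _.
  apply: eq_esum => t _; rewrite big_ord_recl EFinM.
  congr (_%:E * _%:E)%E.
  apply: eq_bigr => i _; by rewrite lift0 !(tnth_nth 0) /= add0n.
under eq_esum do rewrite muleC.
rewrite esumZl; last by move=> x; rewrite lee_fin.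
  by rewrite fc -EFinM big_ord_recl mulrC.
by apply: prodr_ge0 => i _.
Qed.

Lemma fin2 (a b : \bar R) (r : R) : (0 <= a)%E -> (0 <= b)%E -> (a + b = r%:E)%E ->
  exists x y, a = x%:E /\ b = y%:E /\ x + y = r.
Proof.
case: a => [x| |] //; case: b => [y| |] //= _ _ [<-]; by exists x, y.
Qed.

Definition mn (X X' : distZ) (a : int) :=
  if dpmf X a <= dpmf X' a then dpmf X a else dpmf X' a.
Definition pp (X X' : distZ) (a : int) := dpmf X a - mn X X' a.
Definition qq (X X' : distZ) (a : int) := dpmf X' a - mn X X' a.

Lemma mn_ge0 X X' a : 0 <= mn X X' a.
Proof. by rewrite /mn; case: ifP => _; apply: dpmf_ge0. Qed.
Lemma pp_ge0 X X' a : 0 <= pp X X' a.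
Proof. rewrite /pp /mn subr_ge0; case: ifP => // /negbT; rewrite -ltNge => /ltW //. Qed.
Lemma qq_ge0 X X' a : 0 <= qq X X' a.
Proof. by rewrite /qq /mn subr_ge0; case: ifP. Qed.

Lemma abs_ppqq X X' a : `|dpmf X a - dpmf X' a| = pp X X' a + qq X X' a.
Proof.
rewrite /pp /qq /mn; case: ifP => h.
  rewrite ler0_norm ?subr_le0 //; lra.
move/negbT: h; rewrite -ltNge => h.
rewrite gtr0_norm ?subr_gt0 //; lra.
Qed.

Lemma coupling_sums (X X' : distZ) kappa :
  dTV (dpmf X) (dpmf X') = kappa%:E ->
  \esum_(a in [set: int]) (pp X X' a)%:E = kappa%:E /\
  \esum_(a in [set: int]) (qq X X' a)%:E = kappa%:E /\
  \esum_(a in [set: int]) (mn X X' a)%:E = (1 - kappa)%:E.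
Proof.
move=> hk.
have h1 : (\esum_(a in [set: int]) (mn X X' a)%:E + \esum_(a in [set: int]) (pp X X' a)%:E = 1%:E)%E.
  rewrite -esumD; [|by move=> *; rewrite lee_fin mn_ge0|by move=> *; rewrite lee_fin pp_ge0].
  rewrite -(dpmf_sum1 X); apply: eq_esum => a _; rewrite -EFinD /pp; congr (_%:E); lra.
have h2 : (\esum_(a in [set: int]) (mn X X' a)%:E + \esum_(a in [set: int]) (qq X X' a)%:E = 1%:E)%E.
  rewrite -esumD; [|by move=> *; rewrite lee_fin mn_ge0|by move=> *; rewrite lee_fin qq_ge0].
  rewrite -(dpmf_sum1 X'); apply: eq_esum => a _; rewrite -EFinD /qq; congr (_%:E); lra.
have h3 : (\esum_(a in [set: int]) (pp X X' a)%:E + \esum_(a in [set: int]) (qq X X' a)%:E = (2 * kappa)%:E)%E.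
  rewrite -esumD; [|by move=> *; rewrite lee_fin pp_ge0|by move=> *; rewrite lee_fin qq_ge0].
  move: hk; rewrite /dTV.
  have -> : \esum_(z in [set: int]) (`|dpmf X z - dpmf X' z|)%:E =
     \esum_(i in [set: int]) ((pp X X' i)%:E + (qq X X' i)%:E)%E.
    by apply: eq_esum => a _; rewrite abs_ppqq EFinD.
  have := esum_ge0 (S := [set: int]) (a := fun i => ((pp X X' i)%:E + (qq X X' i)%:E)%E).
  case: (\esum_(i in [set: int]) _) => [x| |] //.
  - by move=> _ /= [<-]; congr (_%:E); lra.
  - by rewrite /= mulr_infty gtr0_sg // mul1e.
  - move=> H; have : (0 <= -oo :> \bar R)%E.
      by apply: H => i _; rewrite -EFinD lee_fin addr_ge0 ?pp_ge0 ?qq_ge0.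
    by [].
have g (a : int -> R) : (forall i, 0 <= a i) -> (0 <= \esum_(i in [set: int]) (a i)%:E)%E.
  by move=> a0; apply: esum_ge0 => i _; rewrite lee_fin.
have [m [p [Em [Ep e1]]]] := fin2 _ _ _ (g _ (mn_ge0 X X')) (g _ (pp_ge0 X X')) h1.
have [m' [q [Em' [Eq e2]]]] := fin2 _ _ _ (g _ (mn_ge0 X X')) (g _ (qq_ge0 X X')) h2.
move: Em' h3; rewrite Em Ep Eq => -[em] /=; rewrite -EFinD => -[e3].
split; [|split]; congr (_%:E); lra.
Qed.

Definition pi (X X' : distZ) (kappa : R) (a b : int) :=
  (if a == b then mn X X' a else 0) + pp X X' a * qq X X' b / kappa.

Lemma pi_ge0 X X' kappa a b : 0 < kappa -> 0 <= pi X X' kappa a b.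
Proof.
move=> k0; rewrite /pi addr_ge0 //; first by case: ifP => _ //; apply: mn_ge0.
by rewrite divr_ge0 ?(ltW k0) // mulr_ge0 ?pp_ge0 ?qq_ge0.
Qed.

Lemma esum_pt' (a0 : int) (v : R) : 0 <= v ->
  \esum_(x in [set: int]) (if a0 == x then v else 0)%:E = v%:E.
Proof.
move=> v0; rewrite -(@esum_pt _ a0 _ v0); apply: eq_esum => x _; by rewrite eq_sym.
Qed.

Lemma pi_marg1 (X X' : distZ) (kappa : R) a : 0 < kappa ->
  dTV (dpmf X) (dpmf X') = kappa%:E ->
  \esum_(b in [set: int]) (pi X X' kappa a b)%:E = (dpmf X a)%:E.
Proof.
move=> k0 hk; have [Sp [Sq Sm]] := coupling_sums _ _ _ hk.
rewrite /pi; under eq_esum do rewrite EFinD.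
rewrite esumD; last 2 first.
- by move=> b _; rewrite lee_fin; case: ifP => _ //; apply: mn_ge0.
- by move=> b _; rewrite lee_fin divr_ge0 ?(ltW k0) // mulr_ge0 ?pp_ge0 ?qq_ge0.
rewrite esum_pt' ?mn_ge0 //.
under eq_esum do rewrite mulrAC EFinM.
rewrite esumZl ?Sq; last 2 first.
- by rewrite divr_ge0 ?(ltW k0) // pp_ge0.
- by move=> b; rewrite lee_fin qq_ge0.
rewrite -EFinM -EFinD divfK ?gt_eqF // /pp; congr (_%:E); lra.
Qed.

Lemma pi_marg2 (X X' : distZ) (kappa : R) b : 0 < kappa ->
  dTV (dpmf X) (dpmf X') = kappa%:E ->
  \esum_(a in [set: int]) (pi X X' kappa a b)%:E = (dpmf X' b)%:E.
Proof.
move=> k0 hk; have [Sp [Sq Sm]] := coupling_sums _ _ _ hk.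
rewrite /pi; under eq_esum do rewrite EFinD.
rewrite esumD; last 2 first.
- by move=> a _; rewrite lee_fin; case: ifP => _ //; apply: mn_ge0.
- by move=> a _; rewrite lee_fin divr_ge0 ?(ltW k0) // mulr_ge0 ?pp_ge0 ?qq_ge0.
rewrite (eq_esum (b := fun x => (if x == b then mn X X' b else 0)%:E)); last first.
  by move=> x _; case: eqP => [->|].
rewrite esum_pt ?mn_ge0 //.
rewrite (eq_esum (b := fun a => ((qq X X' b / kappa)%:E * (pp X X' a)%:E)%E)); last first.
  by move=> a _; rewrite -EFinM; congr (_%:E); rewrite [RHS]mulrC mulrA.
rewrite esumZl ?Sp; last 2 first.
- by rewrite divr_ge0 ?(ltW k0) // ?qq_ge0.
- by move=> a; rewrite lee_fin pp_ge0.
rewrite -EFinM -EFinD divfK ?gt_eqF // /qq; congr (_%:E); lra.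
Qed.

Definition rr (X X' : distZ) (kappa l : R) (a b : int) :=
  (if a == b then mn X X' a else 0) + expR l * (pp X X' a * qq X X' b / kappa).

Lemma rr_ge0 X X' kappa l a b : 0 < kappa -> 0 <= rr X X' kappa l a b.
Proof.
move=> k0; rewrite /rr addr_ge0 //; first by case: ifP => _ //; apply: mn_ge0.
by rewrite mulr_ge0 ?expR_ge0 // divr_ge0 ?(ltW k0) // mulr_ge0 ?pp_ge0 ?qq_ge0.
Qed.

Lemma rr_marg (X X' : distZ) (kappa l : R) a : 0 < kappa ->
  dTV (dpmf X) (dpmf X') = kappa%:E ->
  \esum_(b in [set: int]) (rr X X' kappa l a b)%:E = (mn X X' a + expR l * pp X X' a)%:E.
Proof.
move=> k0 hk; have [Sp [Sq Sm]] := coupling_sums _ _ _ hk.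
rewrite /rr; under eq_esum do rewrite EFinD.
rewrite esumD; last 2 first.
- by move=> b _; rewrite lee_fin; case: ifP => _ //; apply: mn_ge0.
- by move=> b _; rewrite lee_fin mulr_ge0 ?expR_ge0 // divr_ge0 ?(ltW k0) // mulr_ge0 ?pp_ge0 ?qq_ge0.
rewrite esum_pt' ?mn_ge0 //.
rewrite (eq_esum (b := fun x => ((expR l * pp X X' a / kappa)%:E * (qq X X' x)%:E)%E)); last first.
  by move=> x _; rewrite -EFinM; congr (_%:E); rewrite !mulrA mulrAC.
rewrite esumZl ?Sq; last 2 first.
- by rewrite divr_ge0 ?(ltW k0) // mulr_ge0 ?expR_ge0 ?pp_ge0.
- by move=> b; rewrite lee_fin qq_ge0.
by rewrite -EFinM -EFinD divfK ?gt_eqF.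
Qed.

Lemma rr_tot (X X' : distZ) (kappa l : R) : 0 < kappa ->
  dTV (dpmf X) (dpmf X') = kappa%:E ->
  \esum_(a in [set: int]) (mn X X' a + expR l * pp X X' a)%:E = (1 - kappa + expR l * kappa)%:E.
Proof.
move=> k0 hk; have [Sp [Sq Sm]] := coupling_sums _ _ _ hk.
under eq_esum do rewrite EFinD EFinM.
rewrite esumD; last 2 first.
- by move=> b _; rewrite lee_fin mn_ge0.
- by move=> b _; rewrite -EFinM lee_fin mulr_ge0 ?expR_ge0 ?pp_ge0.
by rewrite esumZl ?expR_ge0 ?Sm ?Sp // => b; rewrite lee_fin pp_ge0.
Qed.

Lemma pi_le_rr X X' kappa l a b : 0 < kappa -> 0 <= l ->
  pi X X' kappa a b * (if a == b then 1 else expR l) <= rr X X' kappa l a b.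
Proof.
move=> k0 l0; rewrite /pi /rr.
have h : 0 <= pp X X' a * qq X X' b / kappa.
  by rewrite divr_ge0 ?(ltW k0) // mulr_ge0 ?pp_ge0 ?qq_ge0.
have e1 : 1 <= expR l by have := expR_ge1Dx l; lra.
case: ifP => _.
  rewrite mulr1 lerD2l; nra.
by rewrite !add0r mulrC.
Qed.

Definition W (X X' : distZ) (kappa : R) n (s t : n.-tuple int) :=
  \prod_(i < n) pi X X' kappa (tnth s i) (tnth t i).
Arguments W X X' kappa {n} s t.

Lemma W_ge0 X X' kappa n (s t : n.-tuple int) : 0 < kappa -> 0 <= W X X' kappa s t.
Proof. by move=> k0; apply: prodr_ge0 => i _; apply: pi_ge0. Qed.

Lemma W_marg1 (X X' : distZ) (kappa : R) n (s : n.-tuple int) : 0 < kappa ->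
  dTV (dpmf X) (dpmf X') = kappa%:E ->
  \esum_(t in [set: n.-tuple int]) (W X X' kappa s t)%:E =
  (\prod_(i < n) dpmf X (tnth s i))%:E.
Proof.
move=> k0 hk.
have := prod_esum _ (fun i b => pi X X' kappa (nth 0 s i) b)
  (fun i => dpmf X (nth 0 s i)) (fun i z => pi_ge0 _ _ _ _ _ k0)
  (fun i => pi_marg1 _ _ _ _ k0 hk).
move=> H; rewrite (_ : (\prod_(i < n) dpmf X (tnth s i)) = \prod_(i < n) dpmf X (nth 0 s i));
  last by apply: eq_bigr => i _; rewrite (tnth_nth 0).
rewrite -H; apply: eq_esum => t _; congr (_%:E); apply: eq_bigr => i _.
by rewrite (tnth_nth 0 s).
Qed.

Lemma W_marg2 (X X' : distZ) (kappa : R) n (t : n.-tuple int) : 0 < kappa ->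
  dTV (dpmf X) (dpmf X') = kappa%:E ->
  \esum_(s in [set: n.-tuple int]) (W X X' kappa s t)%:E =
  (\prod_(i < n) dpmf X' (tnth t i))%:E.
Proof.
move=> k0 hk.
have := prod_esum _ (fun i a => pi X X' kappa a (nth 0 t i))
  (fun i => dpmf X' (nth 0 t i)) (fun i z => pi_ge0 _ _ _ _ _ k0)
  (fun i => pi_marg2 _ _ _ _ k0 hk).
move=> H; rewrite (_ : (\prod_(i < n) dpmf X' (tnth t i)) = \prod_(i < n) dpmf X' (nth 0 t i));
  last by apply: eq_bigr => i _; rewrite (tnth_nth 0).
rewrite -H; apply: eq_esum => s _; congr (_%:E); apply: eq_bigr => i _.
by rewrite (tnth_nth 0 t).
Qed.

Lemma RR_sum (X X' : distZ) (kappa l : R) n : 0 < kappa ->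
  dTV (dpmf X) (dpmf X') = kappa%:E ->
  \esum_(s in [set: n.-tuple int]) \esum_(t in [set: n.-tuple int])
     (\prod_(i < n) rr X X' kappa l (tnth s i) (tnth t i))%:E =
  ((1 - kappa + expR l * kappa) ^+ n)%:E.
Proof.
move=> k0 hk.
transitivity (\esum_(s in [set: n.-tuple int])
   (\prod_(i < n) (mn X X' (tnth s i) + expR l * pp X X' (tnth s i)))%:E).
  apply: eq_esum => s _.
  have := prod_esum _ (fun i b => rr X X' kappa l (nth 0 s i) b)
    (fun i => mn X X' (nth 0 s i) + expR l * pp X X' (nth 0 s i))
    (fun i z => rr_ge0 _ _ _ _ _ _ k0) (fun i => rr_marg _ _ _ _ _ k0 hk).
  move=> H; rewrite (_ : (\prod_(i < n) (mn X X' (tnth s i) + expR l * pp X X' (tnth s i))) =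
     \prod_(i < n) (mn X X' (nth 0 s i) + expR l * pp X X' (nth 0 s i)));
    last by apply: eq_bigr => i _; rewrite (tnth_nth 0).
  rewrite -H; apply: eq_esum => t _; congr (_%:E); apply: eq_bigr => i _.
  by rewrite (tnth_nth 0 s).
have := prod_esum n (fun i a => mn X X' a + expR l * pp X X' a)
    (fun i => 1 - kappa + expR l * kappa)
    (fun i z => addr_ge0 (mn_ge0 _ _ _) (mulr_ge0 (expR_ge0 _) (pp_ge0 _ _ _)))
    (fun i => rr_tot _ _ _ _ k0 hk).
by rewrite prodr_const card_ord.
Qed.

Lemma dTV_tri (p q r : int -> R) : (dTV p r <= dTV p q + dTV q r)%E.
Proof.
rewrite /dTV -ge0_muleDr; last 2 first.
- by apply: esum_ge0 => z _; rewrite lee_fin.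
- by apply: esum_ge0 => z _; rewrite lee_fin.
apply: lee_wpmul2l; first by rewrite lee_fin.
rewrite -esumD; [|by move=> *; rewrite lee_fin|by move=> *; rewrite lee_fin].
apply: le_esum => z _; rewrite -EFinD lee_fin.
by rewrite (le_trans _ (ler_normD _ _)) // addrA subrK.
Qed.

Definition Dn n (s t : n.-tuple int) : nat := (\sum_(i < n) (tnth s i != tnth t i))%nat.
Arguments Dn {n} s t.

Lemma dTV_unif n (s t : n.-tuple int) (Zd : distZ) : (0 < n)%nat ->
  (dTV (unif_plus s Zd) (unif_plus t Zd) <= ((Dn s t)%:R / n%:R)%:E)%E.
Proof.
move=> n0.
have nR : 0 < n%:R :> R by rewrite ltr0n.
pose g (i : 'I_n) (x : int) :=
  if tnth s i != tnth t i then (dpmf Zd (x - tnth s i) + dpmf Zd (x - tnth t i)) / n%:R else 0.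
have g0 i x : 0 <= g i x.
  rewrite /g; case: ifP => // _; by rewrite divr_ge0 ?(ltW nR) // addr_ge0 ?dpmf_ge0.
have pw x : `|unif_plus s Zd x - unif_plus t Zd x| <= \sum_(i < n) g i x.
  rewrite /unif_plus -sumrB (le_trans (ler_norm_sum _ _ _)) //.
  apply: ler_sum => i _; rewrite /g -mulrBl normrM (gtr0_norm (x := n%:R^-1)) ?invr_gt0 //.
  case: ifP => h.
    rewrite ler_pM2r ?invr_gt0 //.
    by rewrite (le_trans (ler_normB _ _)) // !ger0_norm ?dpmf_ge0.
  by move/negbFE: h => /eqP ->; rewrite subrr normr0 mul0r.
have sg i : \esum_(x in [set: int]) (g i x)%:E =
    ((tnth s i != tnth t i)%:R * 2 / n%:R)%:E.
  rewrite /g; case: (boolP (tnth s i != tnth t i)) => h /=; last first.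
    by rewrite mul0r mul0r; apply: esum1 => x _.
  under eq_esum do rewrite mulrC EFinM EFinD.
  rewrite esumZl; last 2 first.
  - by rewrite invr_ge0 ltW.
  - by move=> x; rewrite -EFinD lee_fin addr_ge0 ?dpmf_ge0.
  rewrite esumD; [|by move=> *; rewrite lee_fin dpmf_ge0|by move=> *; rewrite lee_fin dpmf_ge0].
  rewrite (esum_shift (fun z => (dpmf Zd z)%:E)) (esum_shift (fun z => (dpmf Zd z)%:E)).
  by rewrite dpmf_sum1 -EFinD -EFinM mul1r mulrC.
rewrite /dTV.
apply: (le_trans (lee_wpmul2l _ (le_esum (I := [set: int]) (b := fun x => (\sum_(i < n) g i x)%:E) _))).
- by rewrite lee_fin.
- by move=> x _; rewrite lee_fin pw.
under eq_esum do rewrite -sumEFin.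
rewrite esum_sum; last by move=> x i _ _; rewrite lee_fin.
under eq_bigr do rewrite sg.
rewrite sumEFin -EFinM lee_fin /Dn natr_sum mulr_suml mulr_sumr.
apply: ler_sum => i _; rewrite le_eqVlt; apply/orP; left; apply/eqP.
field; apply/lt0r_neq0; exact: nR.
Qed.

Lemma expR_quad (l : R) : 0 <= l -> l <= 1/4 -> expR l <= 1 + l + 2 * l ^+ 2.
Proof.
move=> l0 l1.
have hb := expR_ge1Dx (- l).
have ab : expR l * expR (- l) = 1 by rewrite -exp.expRD subrr exp.expR0.
have a0 := expR_gt0 l.
have h1 : expR l * (1 - l) <= 1.
  by rewrite -ab ler_wpM2l ?(ltW a0) //; lra.
have h2 : 1 <= (1 + l + 2 * l ^+ 2) * (1 - l).
  have : 0 <= l ^+ 2 * (1 - 2 * l) by apply: mulr_ge0; [apply: sqr_ge0 | lra].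
  rewrite expr2; nra.
have h3 : 0 < 1 - l by lra.
by rewrite -(ler_pM2r h3); apply: le_trans h2.
Qed.

Lemma prod_if_exp n (s t : n.-tuple int) (e : R) :
  \prod_(i < n) (if tnth s i == tnth t i then 1 else e) = e ^+ Dn s t.
Proof.
rewrite /Dn -prodrXr; apply: eq_bigr => i _.
by case: eqP => _ /=; rewrite ?expr0 ?expr1.
Qed.

Lemma Dn_le {n} (s t : n.-tuple int) : (Dn s t <= n)%nat.
Proof.
rewrite /Dn -[X in (_ <= X)%nat]card_ord -sum1_card.
by apply: leq_sum => i _; exact: leq_b1.
Qed.

Lemma tail_real (kappa eps delta : R) (n : nat) :
  0 < kappa -> kappa < 1 -> 0 < eps -> eps < 1 -> 0 < delta ->
  8 * ln (1 / delta) / eps ^+ 2 < n%:R ->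
  expR (- (eps / 4 * ((kappa + eps) * n%:R))) * (1 - kappa + expR (eps / 4) * kappa) ^+ n
  <= delta.
Proof.
move=> k0 k1 e0 e1 d0 HC.
set l := eps / 4.
have l0 : 0 <= l by rewrite /l; lra.
have l1 : l <= 1/4 by rewrite /l; lra.
have eq := expR_quad _ l0 l1.
have b0 : 0 <= 1 - kappa + expR l * kappa.
  by have := expR_gt0 l; nra.
have hb : 1 - kappa + expR l * kappa <= expR (kappa * (expR l - 1)).
  by have := expR_ge1Dx (kappa * (expR l - 1)); lra.
have hbn : (1 - kappa + expR l * kappa) ^+ n <= expR (n%:R * (kappa * (expR l - 1))).
  rewrite expRM_natl; apply: lerXn2r => //; rewrite nnegrE //.
apply: (le_trans (ler_wpM2l (expR_ge0 _) hbn)).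
rewrite -exp.expRD -[X in _ <= X](@lnK _ delta) ?posrE // ler_expR.
have hn : 0 <= n%:R :> R by [].
have e2 : 0 < eps ^+ 2 by rewrite exprn_gt0.
move: HC; rewrite ltr_pdivrMr // div1r lnV ?posrE // => HC.
have : n%:R * (kappa * (expR l - 1)) <= n%:R * (kappa * (l + 2 * l ^+ 2)).
  apply: ler_wpM2l => //; apply: ler_wpM2l; [exact: ltW| lra].
have hint : 0 <= n%:R * (eps * eps) * (1 - kappa).
  by apply: mulr_ge0; [apply: mulr_ge0 => //; nra | lra].
rewrite /l !expr2 in HC *.
nra.
Qed.

Lemma tail (X X' : distZ) (kappa eps delta : R) (n : nat) :
  0 < kappa -> kappa < 1 -> 0 < eps -> 0 < delta ->
  dTV (dpmf X) (dpmf X') = kappa%:E ->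
  8 * ln (1 / delta) / eps ^+ 2 < n%:R ->
  (\esum_(s in [set: n.-tuple int]) \esum_(t in [set: n.-tuple int])
     (if (Dn s t)%:R <= (kappa + eps) * n%:R then 0 else W X X' kappa s t)%:E
   <= delta%:E)%E.
Proof.
move=> k0 k1 e0 d0 hk HC.
case: (lerP 1 eps) => he.
  rewrite esum1 ?lee_fin ?(ltW d0) // => s _; apply: esum1 => t _.
  rewrite ifT //.
  have := Dn_le s t; rewrite -(ler_nat R) => h.
  have hn : 0 <= n%:R :> R by [].
  nra.
set l := eps / 4.
set K := expR (- (l * ((kappa + eps) * n%:R))).
have l0 : 0 <= l by rewrite /l; lra.
have pw s t : ((if (Dn s t)%:R <= (kappa + eps) * n%:R then 0 else W X X' kappa s t)%:E <=
   (K * \prod_(i < n) rr X X' kappa l (tnth s i) (tnth t i))%:E)%E.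
  rewrite lee_fin.
  have Pr : 0 <= \prod_(i < n) rr X X' kappa l (tnth s i) (tnth t i).
    by apply: prodr_ge0 => i _; apply: rr_ge0.
  case: ifP => hf; first by apply: mulr_ge0 => //; apply: expR_ge0.
  move/negbT: hf; rewrite -ltNge => hf.
  have hx : 1 <= expR (l * ((Dn s t)%:R - (kappa + eps) * n%:R)).
    have := expR_ge1Dx (l * ((Dn s t)%:R - (kappa + eps) * n%:R)).
    have : 0 <= l * ((Dn s t)%:R - (kappa + eps) * n%:R).
      by apply: mulr_ge0 => //; lra.
    lra.
  apply: (le_trans (ler_peMr (W_ge0 X X' kappa n s t k0) hx)).
  rewrite mulrBr exp.expRD -/K mulrA [X in X <= _]mulrC; apply: ler_wpM2l; first exact: expR_ge0.
  rewrite (mulrC l) expRM_natl -prod_if_exp /W -big_split /=.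
  apply: ler_prod => i _; apply/andP; split.
    by apply: mulr_ge0; [apply: pi_ge0|case: ifP => _ //; apply: expR_ge0].
  exact: pi_le_rr.
apply: (le_trans (le_esum (fun s _ => le_esum (fun t _ => pw s t)))).
rewrite (eq_esum (b := fun s : n.-tuple int => (K%:E * \esum_(t in [set: n.-tuple int])
   (\prod_(i < n) rr X X' kappa l (tnth s i) (tnth t i))%:E)%E)); last first.
  move=> s _; rewrite -esumZl ?expR_ge0 //; last first.
    by move=> t; rewrite lee_fin; apply: prodr_ge0 => i _; apply: rr_ge0.
rewrite esumZl ?expR_ge0 //; last first.
  by move=> s; apply: esum_ge0 => t _; rewrite lee_fin; apply: prodr_ge0 => i _; apply: rr_ge0.
rewrite RR_sum // -EFinM lee_fin.
exact: tail_real.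
Qed.

Lemma Dn_sym n (s t : n.-tuple int) : Dn t s = Dn s t.
Proof. by rewrite /Dn; apply: eq_bigr => i _; rewrite eq_sym. Qed.

Lemma good_step (X X' Zd : distZ) n (s t : n.-tuple int) (kappa eps : R) :
  (0 < n)%nat -> dTV (dpmf X) (dpmf X') = kappa%:E ->
  (Dn s t)%:R <= (kappa + eps) * n%:R ->
  (dTV (unif_plus s Zd) (dpmf X) <= eps%:E)%E ->
  (dTV (unif_plus t Zd) (dpmf X') <= (2 * eps + 2 * kappa)%:E)%E.
Proof.
move=> n0 hk hD hs.
have h1 := dTV_unif _ t s Zd n0; rewrite Dn_sym in h1.
have h2 : (dTV (unif_plus s Zd) (dpmf X') <= (eps + kappa)%:E)%E.
  apply: (le_trans (dTV_tri _ (dpmf X) _)); rewrite hk EFinD.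
  by apply: leeD.
apply: (le_trans (dTV_tri _ (unif_plus s Zd) _)).
apply: (le_trans (leeD h1 h2)); rewrite -EFinD lee_fin.
have nR : 0 < n%:R :> R by rewrite ltr0n.
have : (Dn s t)%:R / n%:R <= kappa + eps by rewrite ler_pdivrMr.
lra.
Qed.

Theorem lemma30 :
  exists C : R, 0 < C /\
  forall (X X' Zd : distZ) (eps delta kappa : R) (T T0 : nat),
    0 < eps -> 0 < delta ->
    kernel_learnable X Zd eps delta T ->
    dTV (dpmf X) (dpmf X') = kappa%:E -> 0 < kappa -> kappa < 1 ->
    (T < T0)%nat ->
    C * ln (1 / delta) / eps ^+ 2 < T0%:R ->
    kernel_learnable X' Zd (2 * eps + 2 * kappa) (2 * delta) T0.
Proof.
exists 8; split; first lra.
move=> X X' Zd eps delta kappa T T0 e0 d0 HL hk k0 k1 TT0 HC n HT1.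
have n0 : (0 < n)%nat by apply: leq_trans HT1; apply: leq_ltn_trans TT0.
have HX := HL n (leq_trans (ltnW TT0) HT1).
have HC' : 8 * ln (1 / delta) / eps ^+ 2 < n%:R.
  by apply: (lt_le_trans HC); rewrite ler_nat.
rewrite /prob_iid in HX *.
set G := [set s : n.-tuple int | (dTV (unif_plus s Zd) (dpmf X) <= eps%:E)%E] in HX.
set G' := [set s : n.-tuple int | (dTV (unif_plus s Zd) (dpmf X') <= (2 * eps + 2 * kappa)%:E)%E].
have Wg s t : (0 <= (W X X' kappa s t)%:E)%E by rewrite lee_fin; apply: W_ge0.
have E1 : \esum_(s in G) (\prod_(i < n) dpmf X (tnth s i))%:E =
   \esum_(s in [set: n.-tuple int]) \esum_(t in [set: n.-tuple int])
     (if s \in G then (W X X' kappa s t)%:E else 0%E).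
  rewrite esum_mkcond; apply: eq_esum => s _; case: ifP => _.
    by rewrite W_marg1.
  by rewrite esum1.
have E2 : \esum_(t in G') (\prod_(i < n) dpmf X' (tnth t i))%:E =
   \esum_(s in [set: n.-tuple int]) \esum_(t in [set: n.-tuple int])
     (if t \in G' then (W X X' kappa s t)%:E else 0%E).
  rewrite esum_swap; last by move=> s t; case: ifP => _ //; apply: Wg.
  rewrite esum_mkcond; apply: eq_esum => t _; case: ifP => _.
    by rewrite W_marg2.
  by rewrite esum1.
have pw s t : ((if s \in G then (W X X' kappa s t)%:E else 0) <=
   (if t \in G' then (W X X' kappa s t)%:E else 0) +
   (if (Dn s t)%:R <= (kappa + eps) * n%:R then 0 else W X X' kappa s t)%:E)%E.
  have w0 := W_ge0 X X' kappa n s t k0.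
  case: (boolP (s \in G)) => hs; last first.
    by apply: adde_ge0; [case: ifP => _ //; apply: Wg | rewrite lee_fin; case: ifP].
  case: (boolP ((Dn s t)%:R <= (kappa + eps) * n%:R)) => hf /=.
    have ht : t \in G'.
      apply: mem_set; rewrite /G' /=.
      apply: (good_step X X' Zd n s t kappa eps n0 hk hf).
      by have := set_mem hs; rewrite /G /=.
    by rewrite ht -EFinD addr0.
  by case: ifP => _; rewrite -?EFinD ?add0e lee_fin //; lra.
have H3 := tail X X' kappa eps delta n k0 k1 e0 d0 hk HC'.
have : ((1 - delta)%:E <= \esum_(t in G') (\prod_(i < n) dpmf X' (tnth t i))%:E + delta%:E)%E.
  apply: (le_trans HX); rewrite E1 E2.
  apply: (le_trans (le_esum (fun s _ => le_esum (fun t _ => pw s t)))).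
  rewrite (eq_esum (b := fun s : n.-tuple int =>
     (\esum_(t in [set: n.-tuple int]) (if t \in G' then (W X X' kappa s t)%:E else 0) +
      \esum_(t in [set: n.-tuple int])
       (if (Dn s t)%:R <= (kappa + eps) * n%:R then 0 else W X X' kappa s t)%:E)%E)); last first.
    move=> s _; apply: esumD => t _.
      by case: ifP => _ //; apply: Wg.
    by rewrite lee_fin; case: ifP => _ //; apply: W_ge0.
  rewrite esumD; last 2 first.
  - by move=> s _; apply: esum_ge0 => t _; case: ifP => _ //; apply: Wg.
  - by move=> s _; apply: esum_ge0 => t _; rewrite lee_fin; case: ifP => _ //; apply: W_ge0.
  by apply: leeD.
have P0 : (0 <= \esum_(t in G') (\prod_(i < n) dpmf X' (tnth t i))%:E)%E.
  by apply: esum_ge0 => t _; rewrite lee_fin; apply: prodr_ge0 => i _; apply: dpmf_ge0.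
move: P0; case: (\esum_(t in G') _) => [x| |] //= _.
  have -> : (2 * delta)%R = 2 * delta by [].
  rewrite -EFinD !lee_fin; lra.
move=> _; exact: leey.
Qed.
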